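(* Let $p\in(1,\infty)$ and $q=\frac{p}{p-1}$. Let $G=(V,E)$ be a connected graph and let $A,B\subseteq V$ be non-empty disjoint subsets. Let $\widehat G=(\widehat V,\widehat E)$ be the graph with $\widehat V=V\cup\{v_x: x\in A\cup B\}$ (new formal vertices, one for each $x\in A\cup B$) and $\widehat E=E\cup\{\{v_x,x\}: x\in A\cup B\}$, and put $\widehat A=\{v_x:x\in A\}$, $\widehat B=\{v_x: x\in B\}$. There is a constant $C\ge 1$, depending only on $\deg(G)$ and continuously on $p\in(1,\infty)$, such that whenever $F$ is a unit flow from $A$ to $B$ in $G$ and $\widehat F$ is the unit flow from $\widehat A$ to $\widehat B$ in $\widehat G$ obtained by extending $F$ via \[ \widehat F(v_x,x):=\operatorname{div}(F)(x)=\sum_{\{x,y\}\in E}F(x,y)\quad (x\in A\cup B), \] (and $\widehat F(x,v_x)=-\widehat F(v_x,x)$), then \[ \mathcal E_q(\widehat F)\le C\cdot \mathcal E_q(F). \] Furthermore, $C$ can be chosen so that $C^{-p/q}$ is continuous in $p\in[1,\infty)$ (i.e. extends continuously to $p=1$).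
   Context: A graph is a pair $G=(V,E)$ with $V$ a finite non-empty set and $E\subseteq V\times V$ such that $(x,y)\in E$ implies $(y,x)\notin E$ (in particular there are no loops); we write $\{x,y\}\in E$ if $(x,y)\in E$ or $(y,x)\in E$. Paths and connectedness are taken in the underlying undirected graph. The degree of a vertex is the number of $y$ with $\{x,y\}\in E$, and $\deg(G)$ is the maximal degree. A function $F:V\times V\to\mathbb R$ is antisymmetric if $F(x,y)=-F(y,x)$ for all $x,y$ and $F(x,y)=0$ unless $\{x,y\}\in E$. Its divergence is $\operatorname{div}(F)(x)=\sum_{\{x,y\}\in E}F(x,y)$. For disjoint non-empty $A,B\subseteq V$, an antisymmetric $F$ is a flow from $A$ to $B$ if $\operatorname{div}(F)(x)=0$ for all $x\notin A\cup B$; its total flow is $I(F)=\sum_{x\in A}\operatorname{div}(F)(x)$, and it is a unit flow if $I(F)=1$. The $q$-energy of $F$ is $\mathcal E_q(F)=\sum_{\{x,y\}\in E}|F(x,y)|^q$, each unordered edge counted once. *)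

(* Defs.v *)
From HB Require Import structures.
From mathcomp Require Import all_boot all_order all_algebra.
From mathcomp Require Import all_classical all_reals all_analysis.
Set Implicit Arguments. Unset Strict Implicit. Unset Printing Implicit Defensive.
Import Order.TTheory GRing.Theory Num.Theory.
Import numFieldNormedType.Exports.
Local Open Scope ring_scope.

Section Graphs.
Variables (R : realType) (V : finType).

(* A graph on V: an oriented edge relation E with (x,y) in E => (y,x) notin E. *)
Definition is_graph (E : rel V) : Prop := forall x y, E x y -> ~~ E y x.

Definition adj (E : rel V) : rel V := fun x y => E x y || E y x.

Definition vdeg (E : rel V) (x : V) : nat := #|[set y | adj E x y]|.
Definition gdeg (E : rel V) : nat := (\max_(x : V) vdeg E x)%N.

Definition connected_graph (E : rel V) : Prop :=
  forall x y, connect (adj E) x y.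

Definition antisymmetric_fun (E : rel V) (F : V -> V -> R) : Prop :=
  (forall x y, F x y = - F y x) /\ (forall x y, ~~ adj E x y -> F x y = 0).

Definition divergence (E : rel V) (F : V -> V -> R) (x : V) : R :=
  \sum_(y | adj E x y) F x y.

Definition is_flow (E : rel V) (A B : {set V}) (F : V -> V -> R) : Prop :=
  antisymmetric_fun E F /\
  (forall x, x \notin A -> x \notin B -> divergence E F x = 0).

Definition total_flow (E : rel V) (A : {set V}) (F : V -> V -> R) : R :=
  \sum_(x in A) divergence E F x.

Definition unit_flow (E : rel V) (A B : {set V}) (F : V -> V -> R) : Prop :=
  is_flow E A B F /\ total_flow E A F = 1.

(* q-energy: each unordered edge counted once, i.e. once as its oriented pair in E *)
Definition energy (E : rel V) (q : R) (F : V -> V -> R) : R :=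
  \sum_(x : V) \sum_(y | E x y) `|F x y| `^ q.

End Graphs.

Section Hat.
Variables (R : realType) (V : finType) (E : rel V) (A B : {set V}).

Definition hatV : finType := (V + {x : V | x \in A :|: B})%type.

Definition hatE : rel hatV := fun u w =>
  match u, w with
  | inl x, inl y => E x y
  | inr vx, inl y => val vx == y
  | _, _ => false
  end.

Definition hatA : {set hatV} := [set u | if u is inr vx then val vx \in A else false].
Definition hatB : {set hatV} := [set u | if u is inr vx then val vx \in B else false].

Definition hatF (F : V -> V -> R) : hatV -> hatV -> R := fun u w =>
  match u, w with
  | inl x, inl y => F x y
  | inr vx, inl y => if val vx == y then divergence E F y else 0
  | inl y, inr vx => if val vx == y then - divergence E F y else 0
  | _, _ => 0
  end.

End Hat.

Definition conj_exp (R : realType) (p : R) : R := p / (p - 1).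

Arguments hatE {V} E A B _ _.
Arguments hatF {R V} E A B F _ _.
Arguments hatA {V} A B.
Arguments hatB {V} A B.

(* Main.v *)
Require Import Defs.
From HB Require Import structures.
From mathcomp Require Import all_boot all_order all_algebra.
From mathcomp Require Import all_classical all_reals all_analysis.
Import Order.TTheory GRing.Theory Num.Theory.
Import numFieldNormedType.Exports.
Local Open Scope ring_scope.
Local Open Scope classical_set_scope.

Lemma pow_sum_le (R : realType) (I : finType) (P : pred I) (a : I -> R) (q K : R) :
  0 < q -> #|P|%:R <= K ->
  `|\sum_(i | P i) a i| `^ q <= K `^ q * \sum_(i | P i) `|a i| `^ q.
Proof.
move=> q0 hK.
have K0 : 0 <= K by apply: le_trans hK.
set T := \sum_(i | P i) `|a i| `^ q.
have T0 : 0 <= T by apply: sumr_ge0 => i _; exact: powR_ge0.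
have hi : forall i, P i -> `|a i| <= T `^ q^-1.
  move=> i Pi.
  have -> : `|a i| = (`|a i| `^ q) `^ q^-1.
    by rewrite -powRrM mulfV ?gt_eqF // powRr1.
  apply: ge0_ler_powR; rewrite ?nnegrE ?powR_ge0 //; first by rewrite invr_ge0 ltW.
  rewrite /T (bigD1 i) //= lerDl; apply: sumr_ge0 => j _; exact: powR_ge0.
have h1 : `|\sum_(i | P i) a i| <= K * T `^ q^-1.
  apply: le_trans (ler_norm_sum _ _ _) _.
  apply: le_trans (ler_sum _ hi) _.
  rewrite sumr_const -mulr_natl; apply: ler_wpM2r => //; exact: powR_ge0.
apply: le_trans (ge0_ler_powR (ltW q0) _ _ h1) _; rewrite ?nnegrE //.
  by apply: mulr_ge0 => //; exact: powR_ge0.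
rewrite powRM //; last exact: powR_ge0.
by rewrite -powRrM mulVf ?gt_eqF // powRr1.
Qed.
Lemma energy_hat (R : realType) (V : finType) (E : rel V) (A B : {set V})
  (F : V -> V -> R) (q : R) :
  energy (hatE E A B) q (hatF E A B F) =
  energy E q F + \sum_(x in A :|: B) `|divergence E F x| `^ q.
Proof.
rewrite /energy big_sumType /=; congr (_ + _).
  by apply: eq_bigr => x _; rewrite big_sumType /= big_pred0_eq addr0.
rewrite [RHS]big_sub /=; apply: eq_bigr => vx _.
rewrite big_sumType /= big_pred0_eq addr0.
rewrite (big_pred1 (val vx)) /=; last by move=> y; rewrite /= eq_sym.
by rewrite eqxx.
Qed.

Lemma double_count (R : realType) (V : finType) (E : rel V) (F : V -> V -> R) (q : R) :
  is_graph E -> antisymmetric_fun E F ->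
  \sum_x \sum_(y | adj E x y) `|F x y| `^ q = 2 * energy E q F.
Proof.
move=> hG [hF _].
set g := fun x y => `|F x y| `^ q.
have gs : forall x y, g x y = g y x by move=> x y; rewrite /g hF normrN.
rewrite /energy mulr2n mulrDl mul1r.
transitivity (\sum_x \sum_(y | E x y) g x y + \sum_x \sum_(y | E y x) g x y).
  rewrite -big_split /=; apply: eq_bigr => x _.
  rewrite big_mkcond [in X in _ = X + _]big_mkcond [in X in _ = _ + X]big_mkcond -big_split /=; apply: eq_bigr => y _.
  rewrite /adj; case exy: (E x y); case eyx: (E y x) => //=; rewrite ?addr0 ?add0r //.
  by move: (hG _ _ exy); rewrite eyx.
congr (_ + _).
rewrite (eq_bigr (fun x => \sum_y (if E y x then g x y else 0))); last first.
  by move=> x _; rewrite big_mkcond.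
rewrite exchange_big /=; apply: eq_bigr => y _; rewrite [RHS]big_mkcond.
by apply: eq_bigr => x _; case: ifP => // _; rewrite gs.
Qed.

From mathcomp Require Import ring lra.

Definition Cst {R : realType} (d : nat) (p : R) : R := 3 * ((d.+1)%:R `^ conj_exp p).

Lemma conj_gt1 {R : realType} {p : R} : 1 < p -> 1 <= conj_exp p.
Proof.
move=> p1; rewrite /conj_exp ler_pdivlMr ?subr_gt0 //; lra.
Qed.

Lemma main_ineq (R : realType) (V : finType) (E : rel V) (A B : {set V}) (F : V -> V -> R) (p : R) :
  1 < p -> is_graph E -> unit_flow E A B F ->
  energy (hatE E A B) (conj_exp p) (hatF E A B F)
          <= Cst (gdeg E) p * energy E (conj_exp p) F.
Proof.
move=> p1 hG [[hF _] _].
have q1 := conj_gt1 p1.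
set q := conj_exp p in q1 *.
have q0 : 0 < q by lra.
set D := (gdeg E).+1%:R `^ q.
have D1 : 1 <= D.
  apply: le_trans (le1r_powR _ q1); last by rewrite ler1n.
  by rewrite ler1n.
set e := energy E q F.
have e0 : 0 <= e by apply: sumr_ge0 => x _; apply: sumr_ge0 => y _; exact: powR_ge0.
rewrite energy_hat -/e.
have hs : \sum_(x in A :|: B) `|divergence E F x| `^ q <= D * (2 * e).
  apply: (@le_trans _ _ (\sum_x `|divergence E F x| `^ q)).
    rewrite [leRHS](bigID (fun x => x \in A :|: B)) /= lerDl.
    by apply: sumr_ge0 => x _; exact: powR_ge0.
  rewrite -double_count // big_distrr /=; apply: ler_sum => x _.
  apply: pow_sum_le => //.
  rewrite ler_nat; apply: leqW.
  have -> : #|adj E x| = vdeg E x.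
    by apply: eq_card => y; rewrite inE.
  rewrite /gdeg; exact: leq_bigmax.
rewrite /Cst -/q -/D; nra.
Qed.

Lemma CstE {R : realType} (d : nat) :
  Cst d = fun p : R => 3 * expR (conj_exp p * ln (d.+1)%:R).
Proof.
by apply: funext => p; rewrite /Cst /powR pnatr_eq0.
Qed.

Lemma Cst_cont {R : realType} (d : nat) (p : R) : 1 < p -> {for p, continuous (Cst d)}.
Proof.
move=> p1; rewrite CstE.
apply: cvgM; first exact: cvg_cst.
apply: (continuous_comp (f := fun p => conj_exp p * ln (d.+1)%:R)); last exact: continuous_expR.
apply: cvgM; last exact: cvg_cst.
rewrite /conj_exp.
apply: cvgM; first exact: cvg_id.
apply: cvgV; first by rewrite subr_eq0 gt_eqF.
apply: cvgB; [exact: cvg_id | exact: cvg_cst].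
Qed.

Definition gfun {R : realType} (d : nat) (p : R) : R :=
  expR (- (p - 1) * ln 3 - p * ln (d.+1)%:R).

Lemma gfun_cont {R : realType} (d : nat) : continuous (@gfun R d).
Proof.
move=> p.
apply: (continuous_comp (f := fun p : R => - (p - 1) * ln 3 - p * ln (d.+1)%:R)); last exact: continuous_expR.
apply: cvgB; apply: cvgM; try exact: cvg_cst; try exact: cvg_id.
apply: cvgN; apply: cvgB; [exact: cvg_id | exact: cvg_cst].
Qed.

Lemma gfunE {R : realType} (d : nat) (p : R) : 1 < p ->
  gfun d p = Cst d p `^ (- (p / conj_exp p)).
Proof.
move=> p1.
have p0 : p != 0 by rewrite gt_eqF //; lra.
have p10 : p - 1 != 0 by rewrite subr_eq0 gt_eqF.
have -> : p / conj_exp p = p - 1 by rewrite /conj_exp invf_div mulrC divfK.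
rewrite CstE /powR mulf_eq0 expR_eq0 orbF pnatr_eq0 /=.
rewrite lnM ?posrE ?expR_gt0 // expRK /gfun /conj_exp.
congr expR; rewrite mulrDr; congr (_ + _); rewrite mulNr mulrA [(p - 1) * _]mulrC divfK //.
Qed.

Theorem lemma2p12 (R : realType) :
  exists C : nat -> R -> R,
    (forall (d : nat) (p : R), 1 < p -> 1 <= C d p) /\
    (forall (d : nat) (p : R), 1 < p -> {for p, continuous (C d)}) /\
    (forall d : nat, exists g : R -> R,
        {within `[1, +oo[, continuous g} /\
        (forall p : R, 1 < p -> g p = C d p `^ (- (p / conj_exp p)))) /\
    (forall (V : finType) (E : rel V) (A B : {set V}) (F : V -> V -> R) (p : R),
        1 < p ->
        is_graph E -> connected_graph E ->
        A != finset.set0 -> B != finset.set0 -> disjoint (mem A) (mem B) ->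
        unit_flow E A B F ->
        energy (hatE E A B) (conj_exp p) (hatF E A B F)
          <= C (gdeg E) p * energy E (conj_exp p) F).
Proof.
exists Cst; split.
  move=> d p p1; rewrite /Cst.
  have q1 := conj_gt1 p1.
  have : 1 <= (d.+1)%:R `^ conj_exp p.
    apply: le_trans (le1r_powR _ q1); last by rewrite ler1n.
    by rewrite ler1n.
  lra.
split; first by move=> d p p1; exact: Cst_cont.
split.
  move=> d; exists (gfun d); split; first exact: continuous_subspaceT (gfun_cont d).
  exact: gfunE.
move=> V E A B F p p1 hG _ _ _ _ hF; exact: main_ineq.
Qed.
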